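(* Let $\alpha,\beta,p^r,q_{max},M,B,\overline{v}>0$ with $4\alpha p^r>\beta^2$ and $\delta\in[0,1]$. Let $D_0:[0,\infty)\to\mathbb{R}$ be differentiable, concave and strictly increasing. Let $X$ be a cumulative distribution function with density $x>0$ on $(0,\overline{v})$ and support in $[0,\overline{v}]$, let $y$ be the inverse of the strictly decreasing bijection $p\mapsto MB(1-X(p))/p$ from $(0,\overline{v})$ onto $(0,\infty)$, and assume $D\mapsto D\,y(D)$ is concave and differentiable on $D>0$. For a side-payment price $p^t\ge0$, consider the problem in which the ISP chooses $(p^s,q)$ with $p^s\ge0$, $0<q\le q_{max}$, and the CP chooses investment $c$, with demand $D=D_0(c)-\alpha p^s+\beta q$ and utilities $U_{isp}=(p^s-p^r)D+(1-\delta)p^tD-p^rq^2$, $U_{cp}=y(D)D-p^tD-c$; a best strategy is a triple $(p^{s*},q^*,c^* )$ with $(p^{s*},q^* )$ maximizing $U_{isp}$ given $c^*$ and $c^*$ maximizing $U_{cp}$ given $(p^{s*},q^* )$. Let $0\le p^t_x<p^t_y$ and let $(p^{s*}_x,q^*_x,c^*_x)$ and $(p^{s*}_y,q^*_y,c^*_y)$ be best strategies for $p^t_x$ and $p^t_y$ respectively, each satisfying $p^{s*}>0$, $q^*>0$ (with $q^*<q_{max}$) and $c^*>0$. Then $c^*_x>c^*_y$; that is, the optimal investment of the CP is decreasing in the side-payment price.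
   Context: Advertisement model: the CP earns advertising revenue $y(D)D$ from user demand $D$ (where $y(D)$ is the optimal price per attention, determined by $MB(1-X(y(D)))/y(D)=D$ for $M$ advertisers with budget $B$ and valuation cdf $X$), invests $c$ in content raising potential demand to $D_0(c)$, and pays the ISP $p^t$ per unit of demand, taxed at rate $\delta$. The ISP sets user price $p^s$ and QoS $q$, paying $p^r$ per unit of bandwidth. *)

(* Defs.v *)
From Stdlib Require Import Reals.
From Coquelicot Require Import Coquelicot.
Open Scope R_scope.

Definition concave_on (S : R -> Prop) (f : R -> R) : Prop :=
  forall a b t, S a -> S b -> 0 <= t <= 1 ->
    t * f a + (1 - t) * f b <= f (t * a + (1 - t) * b).

Definition differentiable_on_nonneg (f : R -> R) : Prop :=
  (forall c, 0 < c -> ex_derive f c) /\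
  (exists l : R, filterlim (fun h => (f h - f 0) / h) (at_right 0) (locally l)).

Definition strictly_increasing_on_nonneg (f : R -> R) : Prop :=
  forall a b, 0 <= a -> a < b -> f a < f b.

Definition cdf_with_density (vbar : R) (X x : R -> R) : Prop :=
  (forall t, continuous X t) /\
  (forall t, t <= 0 -> X t = 0) /\
  (forall t, vbar <= t -> X t = 1) /\
  (forall t, 0 < t < vbar -> is_derive X t (x t) /\ 0 < x t).

(* y is the inverse of p |-> M B (1 - X p) / p : (0,vbar) -> (0,+oo). *)
Definition is_attention_price (M B vbar : R) (X y : R -> R) : Prop :=
  forall D, 0 < D -> 0 < y D < vbar /\ M * B * (1 - X (y D)) / y D = D.

Definition demand (D0 : R -> R) (alpha beta ps q c : R) : R :=
  D0 c - alpha * ps + beta * q.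

Definition U_isp (pr delta pt ps q D : R) : R :=
  (ps - pr) * D + (1 - delta) * pt * D - pr * q ^ 2.

Definition U_cp (y : R -> R) (pt D c : R) : R :=
  y D * D - pt * D - c.

(* Feasible strategy profiles: p^s >= 0, 0 < q <= qmax, investment c >= 0,
   and positive demand (the advertising revenue y(D) D is only defined for
   D > 0). *)
Definition feasible (D0 : R -> R) (alpha beta qmax ps q c : R) : Prop :=
  0 <= ps /\ 0 < q <= qmax /\ 0 <= c /\ 0 < demand D0 alpha beta ps q c.

Definition best_strategy (D0 y : R -> R) (alpha beta pr qmax delta pt : R)
    (ps q c : R) : Prop :=
  feasible D0 alpha beta qmax ps q c /\
  (forall ps' q', feasible D0 alpha beta qmax ps' q' c ->
     U_isp pr delta pt ps' q' (demand D0 alpha beta ps' q' c)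
       <= U_isp pr delta pt ps q (demand D0 alpha beta ps q c)) /\
  (forall c', feasible D0 alpha beta qmax ps q c' ->
     U_cp y pt (demand D0 alpha beta ps q c') c'
       <= U_cp y pt (demand D0 alpha beta ps q c) c).

(* Main.v *)
Require Import Defs.
From Stdlib Require Import Reals.
From Coquelicot Require Import Coquelicot.
From Stdlib Require Import Lra Psatz.
Open Scope R_scope.

Lemma dlow f a l k r : derivable_pt_lim f a l -> 0 < r ->
  (forall h, 0 < h < r -> k * h <= f (a + h) - f a) -> k <= l.
Proof.
  intros Hd Hr H. destruct (Rle_or_lt k l) as [|Hlt]; [assumption|exfalso].
  destruct (Hd (k - l)) as [d Hdl]; [lra|].
  pose (h := Rmin d r / 2).
  assert (Hm1 : Rmin d r <= d) by apply Rmin_l.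
  assert (Hm2 : Rmin d r <= r) by apply Rmin_r.
  assert (Hm3 : 0 < Rmin d r) by (apply Rmin_pos; [apply cond_pos|lra]).
  assert (Hh : 0 < h < r) by (unfold h; lra).
  assert (Hhd : Rabs h < d) by (rewrite Rabs_right by lra; unfold h; lra).
  specialize (Hdl h ltac:(lra) Hhd). specialize (H h Hh).
  set (Q := (f (a + h) - f a) / h) in *.
  assert (HQ : Q * h = f (a + h) - f a) by (unfold Q; field; lra).
  apply Rabs_def2 in Hdl. nra.
Qed.

Lemma dhigh f a l k r : derivable_pt_lim f a l -> 0 < r ->
  (forall h, 0 < h < r -> - (k * h) <= f (a - h) - f a) -> l <= k.
Proof.
  intros Hd Hr H. destruct (Rle_or_lt l k) as [|Hlt]; [assumption|exfalso].
  destruct (Hd (l - k)) as [d Hdl]; [lra|].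
  pose (h := Rmin d r / 2).
  assert (Hm1 : Rmin d r <= d) by apply Rmin_l.
  assert (Hm2 : Rmin d r <= r) by apply Rmin_r.
  assert (Hm3 : 0 < Rmin d r) by (apply Rmin_pos; [apply cond_pos|lra]).
  assert (Hh : 0 < h < r) by (unfold h; lra).
  assert (Hhd : Rabs (-h) < d) by (rewrite Rabs_Ropp, Rabs_right by lra; unfold h; lra).
  specialize (Hdl (-h) ltac:(lra) Hhd). specialize (H h Hh).
  replace (a + - h) with (a - h) in Hdl by ring.
  set (Q := (f (a - h) - f a) / - h) in *.
  assert (HQ : Q * (- h) = f (a - h) - f a) by (unfold Q; field; lra).
  apply Rabs_def2 in Hdl. nra.
Qed.

Lemma dlip f a l : derivable_pt_lim f a l -> exists d, 0 < d /\
  forall h, Rabs h < d -> Rabs (f (a + h) - f a) <= (Rabs l + 1) * Rabs h.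
Proof.
  intros Hd. destruct (Hd 1) as [d Hdl]; [lra|]. exists d. split; [apply cond_pos|].
  intros h Hh. destruct (Req_dec h 0) as [->|Hn].
  - rewrite Rplus_0_r, Rminus_diag, Rabs_R0. lra.
  - specialize (Hdl h Hn Hh).
    replace (f (a + h) - f a) with (((f (a + h) - f a) / h - l) * h + l * h) by (field; auto).
    eapply Rle_trans; [apply Rabs_triang|]. rewrite !Rabs_mult.
    assert (0 <= Rabs h) by apply Rabs_pos. nra.
Qed.

Lemma quad0 a b eps : 0 < b -> 0 < eps ->
  (forall h, Rabs h < eps -> h * a - b * h ^ 2 <= 0) -> a = 0.
Proof.
  intros Hb He H.
  pose (t := eps / (2 * (Rabs a + 1) + 2 * b * eps)).
  assert (Ha0 : 0 <= Rabs a) by apply Rabs_pos.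
  assert (Hden : 0 < 2 * (Rabs a + 1) + 2 * b * eps) by nra.
  assert (Ht : 0 < t) by (unfold t; apply Rdiv_lt_0_compat; lra).
  assert (Ht1 : t * (2 * (Rabs a + 1) + 2 * b * eps) = eps) by (unfold t; field; lra).
  assert (Hbt0 : 2 * (b * t) * eps < eps) by nra.
  assert (Hbt : b * t < 1/2).
  { apply Rmult_lt_reg_r with eps; lra. }
  assert (Hta : Rabs (t * a) < eps).
  { rewrite Rabs_mult, (Rabs_right t) by lra.
    assert (0 < t * (b * eps)) by (apply Rmult_lt_0_compat; nra). nra. }
  specialize (H (t * a) Hta).
  replace (t * a * a - b * (t * a) ^ 2) with ((a * a) * (t * (1 - b * t))) in H by ring.
  assert (Hp : 0 < t * (1 - b * t)) by (apply Rmult_lt_0_compat; lra).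
  assert (a * a <= 0).
  { apply Rmult_le_reg_r with (t * (1 - b * t)); lra. }
  nra.
Qed.
Lemma gderiv (D0 y : R -> R) a b ps q pt c lD lR :
  derivable_pt_lim D0 c lD ->
  derivable_pt_lim (fun D => D * y D) (demand D0 a b ps q c) lR ->
  derivable_pt_lim (fun c' => U_cp y pt (demand D0 a b ps q c') c') c ((lR - pt) * lD - 1).
Proof.
  intros H1 H2. apply is_derive_Reals in H1. apply is_derive_Reals in H2.
  apply is_derive_Reals.
  set (s := - a * ps + b * q).
  assert (Hh : is_derive (fun c' => D0 c' + s) c (plus lD zero)).
  { apply (is_derive_plus D0 (fun _ => s)). exact H1. exact (is_derive_const (K:=R_AbsRing) (V:=R_NormedModule) s c). }
  assert (Hc : is_derive (fun c' => (fun D => D * y D) (D0 c' + s)) c (scal (plus lD zero) lR)).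
  { apply (is_derive_comp (fun D => D * y D) (fun c' => D0 c' + s)).
    unfold demand in H2. replace (D0 c + s) with (D0 c - a * ps + b * q) by (unfold s; ring). exact H2. exact Hh. }
  assert (Hp : is_derive (fun c' => pt * (D0 c' + s)) c (pt * plus lD zero)).
  { apply is_derive_scal. exact Hh. }
  assert (Hm := is_derive_minus _ _ _ _ _ (is_derive_minus _ _ _ _ _ Hc Hp) (is_derive_id c)).
  unfold plus, minus, scal, zero, one, opp, mult in Hm; simpl in Hm.
  unfold plus, minus, scal, zero, one, opp, mult in Hm; simpl in Hm.
  eapply is_derive_ext; [ | replace ((lR - pt) * lD - 1) with
      (Rplus (Rplus (Rmult (Rplus lD 0) lR) (Ropp (Rmult pt (Rplus lD 0)))) (Ropp 1)) by ring; exact Hm].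
  intro t. unfold plus, minus, scal, zero, one, opp, mult; simpl. unfold U_cp, demand, s. replace (D0 t + (- a * ps + b * q)) with (D0 t - a * ps + b * q) by ring. ring.
Qed.

Lemma cp_foc (D0 y : R -> R) a b ps q pt c lD lR :
  0 < c -> 0 < demand D0 a b ps q c ->
  (forall c', 0 <= c' -> 0 < demand D0 a b ps q c' ->
     U_cp y pt (demand D0 a b ps q c') c' <= U_cp y pt (demand D0 a b ps q c) c) ->
  derivable_pt_lim D0 c lD ->
  derivable_pt_lim (fun D => D * y D) (demand D0 a b ps q c) lR ->
  (lR - pt) * lD = 1.
Proof.
  intros Hc HD Hmax H1 H2.
  pose proof (gderiv D0 y a b ps q pt c lD lR H1 H2) as Hg.
  destruct (dlip _ _ _ H1) as [d [Hd Hl]].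
  set (K := Rabs lD + 1).
  assert (HK : 0 < K) by (unfold K; pose proof (Rabs_pos lD); lra).
  set (Dm := demand D0 a b ps q c) in *.
  set (r := Rmin c (Rmin d (Dm / (2 * K)))).
  assert (Hr1 : r <= c) by apply Rmin_l.
  assert (Hr2 : r <= d) by (eapply Rle_trans; [apply Rmin_r | apply Rmin_l]).
  assert (Hr3 : r <= Dm / (2 * K)) by (eapply Rle_trans; [apply Rmin_r | apply Rmin_r]).
  assert (HDK : 0 < Dm / (2 * K)) by (apply Rdiv_lt_0_compat; lra).
  assert (Hr : 0 < r) by (unfold r; repeat apply Rmin_pos; lra).
  assert (HKr : K * r <= Dm / 2).
  { apply Rle_trans with (K * (Dm / (2 * K))). apply Rmult_le_compat_l; lra.
    right. field. lra. }
  pose proof (deriv_maximum _ (c - r) (c + r) c (exist _ _ Hg) ltac:(lra) ltac:(lra)) as HM.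
  simpl in HM.
  assert (HH : (lR - pt) * lD - 1 = 0).
  { apply HM. intros x Hx1 Hx2. apply Hmax. lra.
    specialize (Hl (x - c)).
    replace (c + (x - c)) with x in Hl by ring.
    assert (Hxc : Rabs (x - c) < r) by (apply Rabs_def1; lra).
    specialize (Hl ltac:(lra)).
    pose proof (Rle_abs (- (D0 x - D0 c))) as Hab. rewrite Rabs_Ropp in Hab.
    assert (K * Rabs (x - c) <= K * r) by (apply Rmult_le_compat_l; lra).
    fold K in Hl. unfold Dm, demand in *. lra. }
  lra.
Qed.

Lemma isp_foc (D0 : R -> R) a b pr qmax delta pt ps q c :
  0 < a -> 0 < b -> 0 < pr ->
  (forall ps' q', feasible D0 a b qmax ps' q' c ->
     U_isp pr delta pt ps' q' (demand D0 a b ps' q' c)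
       <= U_isp pr delta pt ps q (demand D0 a b ps q c)) ->
  0 < ps -> 0 < q < qmax -> 0 <= c -> 0 < demand D0 a b ps q c ->
  demand D0 a b ps q c = a * (ps - pr + (1 - delta) * pt) /\
  b * (ps - pr + (1 - delta) * pt) = 2 * pr * q.
Proof.
  intros Ha Hb Hpr Hopt Hps Hq Hc HD.
  set (Dm := demand D0 a b ps q c) in *.
  set (m := ps - pr + (1 - delta) * pt).
  split.
  - assert (E : Dm - a * m = 0).
    { apply (quad0 _ a (Rmin ps (Dm / a))); auto.
      { apply Rmin_pos; auto. apply Rdiv_lt_0_compat; lra. }
      intros h Hh.
      assert (H1 : Rmin ps (Dm / a) <= ps) by apply Rmin_l.
      assert (H2 : Rmin ps (Dm / a) <= Dm / a) by apply Rmin_r.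
      apply Rabs_def2 in Hh.
      assert (Hah : a * h < Dm).
      { apply Rlt_le_trans with (a * (Dm / a)). apply Rmult_lt_compat_l; lra.
        right; field; lra. }
      assert (Hf : feasible D0 a b qmax (ps + h) q c).
      { unfold feasible, Dm, demand in *. repeat split; lra. }
      specialize (Hopt _ _ Hf).
      assert (Eq : U_isp pr delta pt (ps + h) q (demand D0 a b (ps + h) q c)
                   - U_isp pr delta pt ps q Dm = h * (Dm - a * m) - a * h ^ 2).
      { unfold U_isp, Dm, m, demand. ring. }
      lra. }
    lra.
  - assert (E : b * m - 2 * pr * q = 0).
    { apply (quad0 _ pr (Rmin q (Rmin (qmax - q) (Dm / b)))); auto.
      { repeat apply Rmin_pos; try lra. apply Rdiv_lt_0_compat; lra. }
      intros k Hk.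
      assert (H1 : Rmin q (Rmin (qmax - q) (Dm / b)) <= q) by apply Rmin_l.
      assert (H2 : Rmin q (Rmin (qmax - q) (Dm / b)) <= qmax - q)
        by (eapply Rle_trans; [apply Rmin_r | apply Rmin_l]).
      assert (H3 : Rmin q (Rmin (qmax - q) (Dm / b)) <= Dm / b)
        by (eapply Rle_trans; [apply Rmin_r | apply Rmin_r]).
      apply Rabs_def2 in Hk.
      assert (Hbk : - (b * k) < Dm).
      { apply Rlt_le_trans with (b * (Dm / b)). 2: (right; field; lra).
        replace (- (b * k)) with (b * (- k)) by ring. apply Rmult_lt_compat_l; lra. }
      assert (Hf : feasible D0 a b qmax ps (q + k) c).
      { unfold feasible, Dm, demand in *. repeat split; lra. }
      specialize (Hopt _ _ Hf).
      assert (Eq : U_isp pr delta pt ps (q + k) (demand D0 a b ps (q + k) c)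
                   - U_isp pr delta pt ps q Dm = k * (b * m - 2 * pr * q) - pr * k ^ 2).
      { unfold U_isp, Dm, m, demand. ring. }
      lra. }
    lra.
Qed.

Lemma conc_mono (S : R -> Prop) f a b la lb : concave_on S f -> S a -> S b -> a <= b ->
  derivable_pt_lim f a la -> derivable_pt_lim f b lb -> lb <= la.
Proof.
  intros Hc Ha Hb Hab Hda Hdb.
  destruct (Req_dec a b) as [<-|Hne].
  { right. eapply uniqueness_limite; eauto. }
  assert (Hlt : a < b) by lra.
  set (k := (f b - f a) / (b - a)).
  apply Rle_trans with k.
  - apply (dhigh f b lb k (b - a) Hdb ltac:(lra)).
    intros h Hh. set (s := h / (b - a)).
    assert (Hs : 0 <= s <= 1).
    { unfold s; split. apply Rdiv_le_0_compat; lra.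
      apply Rmult_le_reg_r with (b - a); [lra|]. field_simplify; lra. }
    pose proof (Hc a b s Ha Hb Hs) as HH.
    replace (s * a + (1 - s) * b) with (b - h) in HH by (unfold s; field; lra).
    assert (Hk : k * h = s * (f b - f a)) by (unfold k, s; field; lra).
    lra.
  - apply (dlow f a la k (b - a) Hda ltac:(lra)).
    intros h Hh. set (s := h / (b - a)).
    assert (Hs : 0 <= 1 - s <= 1).
    { unfold s; split.
      - assert (h / (b - a) <= 1). { apply Rmult_le_reg_r with (b - a); [lra|]. field_simplify; lra. } lra.
      - assert (0 <= h / (b - a)) by (apply Rdiv_le_0_compat; lra). lra. }
    pose proof (Hc a b (1 - s) Ha Hb Hs) as HH.
    replace ((1 - s) * a + (1 - (1 - s)) * b) with (a + h) in HH by (unfold s; field; lra).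
    assert (Hk : k * h = s * (f b - f a)) by (unfold k, s; field; lra).
    lra.
Qed.

Lemma deriv_nonneg f a l : strictly_increasing_on_nonneg f -> 0 <= a ->
  derivable_pt_lim f a l -> 0 <= l.
Proof.
  intros Hi Ha Hd. apply (dlow f a l 0 1 Hd ltac:(lra)).
  intros h Hh. pose proof (Hi a (a + h) Ha ltac:(lra)). lra.
Qed.

Lemma eq_lin a b pr delta pt D0c ps q :
  0 < pr ->
  D0c - a * ps + b * q = a * (ps - pr + (1 - delta) * pt) ->
  b * (ps - pr + (1 - delta) * pt) = 2 * pr * q ->
  (ps - pr + (1 - delta) * pt) * (4 * a * pr - b ^ 2) =
    2 * pr * (D0c - a * pr + a * (1 - delta) * pt).
Proof.
  intros Hpr E1 E2.
  apply Rminus_diag_uniq.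
  replace ((ps - pr + (1 - delta) * pt) * (4 * a * pr - b ^ 2) -
    2 * pr * (D0c - a * pr + a * (1 - delta) * pt))
   with ((-2 * pr) * ((D0c - a * ps + b * q) - a * (ps - pr + (1 - delta) * pt))
         - b * (b * (ps - pr + (1 - delta) * pt) - 2 * pr * q)) by ring.
  rewrite E1, E2. ring.
Qed.

Theorem lemma6
  (alpha beta pr qmax M B vbar delta : R)
  (D0 X x y : R -> R)
  (ptx pty psx qx cx psy qy cy : R)
  (Halpha : 0 < alpha) (Hbeta : 0 < beta) (Hpr : 0 < pr) (Hqmax : 0 < qmax)
  (HM : 0 < M) (HB : 0 < B) (Hvbar : 0 < vbar)
  (Hab : beta ^ 2 < 4 * alpha * pr)
  (Hdelta : 0 <= delta <= 1)
  (HD0diff : differentiable_on_nonneg D0)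
  (HD0conc : concave_on (fun c => 0 <= c) D0)
  (HD0inc : strictly_increasing_on_nonneg D0)
  (HX : cdf_with_density vbar X x)
  (Hy : is_attention_price M B vbar X y)
  (HyDconc : concave_on (fun D => 0 < D) (fun D => D * y D))
  (HyDdiff : forall D, 0 < D -> ex_derive (fun D => D * y D) D)
  (Hpt : 0 <= ptx < pty)
  (Hbx : best_strategy D0 y alpha beta pr qmax delta ptx psx qx cx)
  (Hby : best_strategy D0 y alpha beta pr qmax delta pty psy qy cy)
  (Hintx : 0 < psx /\ 0 < qx < qmax /\ 0 < cx)
  (Hinty : 0 < psy /\ 0 < qy < qmax /\ 0 < cy) :
  cy < cx.
Proof.
  destruct Hbx as [Hfx [Hix Hcx]]. destruct Hby as [Hfy [Hiy Hcy]].
  destruct Hintx as [Hpsx [Hqx Hcx0]]. destruct Hinty as [Hpsy [Hqy Hcy0]].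
  pose proof Hfx as [_ [_ [_ HDx]]]. pose proof Hfy as [_ [_ [_ HDy]]].
  destruct (isp_foc D0 alpha beta pr qmax delta ptx psx qx cx Halpha Hbeta Hpr Hix
     Hpsx Hqx ltac:(lra) HDx) as [Ex1 Ex2].
  destruct (isp_foc D0 alpha beta pr qmax delta pty psy qy cy Halpha Hbeta Hpr Hiy
     Hpsy Hqy ltac:(lra) HDy) as [Ey1 Ey2].
  destruct HD0diff as [HD0d _].
  destruct (HD0d cx Hcx0) as [lDx HlDx]. destruct (HD0d cy Hcy0) as [lDy HlDy].
  apply is_derive_Reals in HlDx. apply is_derive_Reals in HlDy.
  destruct (HyDdiff _ HDx) as [lRx HlRx]. destruct (HyDdiff _ HDy) as [lRy HlRy].
  apply is_derive_Reals in HlRx. apply is_derive_Reals in HlRy.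
  assert (Fx : (lRx - ptx) * lDx = 1).
  { apply (cp_foc D0 y alpha beta psx qx ptx cx); auto.
    intros c' Hc' Hd'. apply Hcx. unfold feasible in *. intuition. }
  assert (Fy : (lRy - pty) * lDy = 1).
  { apply (cp_foc D0 y alpha beta psy qy pty cy); auto.
    intros c' Hc' Hd'. apply Hcy. unfold feasible in *. intuition. }
  assert (Px : 0 <= lDx) by (apply (deriv_nonneg D0 cx); auto; lra).
  assert (Py : 0 <= lDy) by (apply (deriv_nonneg D0 cy); auto; lra).
  destruct (Rlt_or_le cy cx) as [|Hle]; [assumption|exfalso].
  assert (HDd : lDy <= lDx) by (apply (conc_mono _ D0 cx cy lDx lDy HD0conc); auto; lra).
  assert (HD0le : D0 cx <= D0 cy).
  { destruct (Req_dec cx cy) as [<-|]; [lra|]. left. apply HD0inc; lra. }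
  pose proof (eq_lin alpha beta pr delta ptx (D0 cx) psx qx Hpr Ex1 Ex2) as Lx.
  pose proof (eq_lin alpha beta pr delta pty (D0 cy) psy qy Hpr Ey1 Ey2) as Ly.
  set (mx := psx - pr + (1 - delta) * ptx) in *.
  set (my := psy - pr + (1 - delta) * pty) in *.
  assert (Hmm : mx <= my).
  { assert (Hd : (my - mx) * (4 * alpha * pr - beta ^ 2) =
       2 * pr * ((D0 cy - D0 cx) + alpha * (1 - delta) * (pty - ptx))) by (rewrite Rmult_minus_distr_r, Lx, Ly; ring).
    assert (0 <= alpha * (1 - delta) * (pty - ptx)).
    { apply Rmult_le_pos; [apply Rmult_le_pos|]; lra. }
    assert (0 <= (my - mx) * (4 * alpha * pr - beta ^ 2)) by (rewrite Hd; apply Rmult_le_pos; lra).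
    destruct (Rle_or_lt mx my) as [|Hc]; [assumption|].
    assert ((my - mx) * (4 * alpha * pr - beta ^ 2) < 0).
    { assert (0 < 4 * alpha * pr - beta ^ 2) by lra. nra. }
    lra. }
  assert (HDle : demand D0 alpha beta psx qx cx <= demand D0 alpha beta psy qy cy).
  { rewrite Ex1, Ey1. apply Rmult_le_compat_l; lra. }
  assert (HRd : lRy <= lRx) by (apply (conc_mono (fun D => 0 < D) (fun D => D * y D) (demand D0 alpha beta psx qx cx) (demand D0 alpha beta psy qy cy) lRx lRy HyDconc); auto).
  assert (lDy > 0).
  { destruct Py as [|E]; auto. rewrite <- E in Fy. lra. }
  assert (lRy - pty > 0) by nra.
  nra.
Qed.
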